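(* Let $Z\in\{0,1\}$ and $S(1),S(0)\in\{0,1\}$ be random variables with $Z\perp\!\!\!\perp \{S(1),S(0),\mathbf{X}\}$, where $\mathbf{X}$ is a covariate vector, and let $S=S(Z)$. Let $p_1=\Pr(S=1\mid Z=1)$ and $p_0=\Pr(S=1\mid Z=0)$, and assume $p_1\ge p_0$. Suppose there is a constant $\xi$ with $0\le \xi<1$ such that $\xi = \Pr(U=\bar{s}s\mid\mathbf{X})/\Pr(U=s\bar{s}\mid\mathbf{X})$. Then $$\pi_{s\bar{s}} = \frac{p_1-p_0}{1-\xi},\quad \pi_{\bar{s}\bar{s}} = 1-p_0-\frac{p_1-p_0}{1-\xi},\quad \pi_{ss} = p_1 - \frac{p_1-p_0}{1-\xi},\quad \pi_{\bar{s}s} = \frac{\xi(p_1-p_0)}{1-\xi},$$ and consequently $$0\le \xi\le 1-\frac{p_1-p_0}{\min(p_1,1-p_0)}\le 1.$$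
   Context: The principal stratum is $U=(S(1),S(0))$, whose values $(1,1),(1,0),(0,1),(0,0)$ are labelled $ss, s\bar{s}, \bar{s}s, \bar{s}\bar{s}$; $\pi_u=\Pr(U=u)$. No monotonicity assumption is made. Conditioning events and denominators (including $\Pr(U=s\bar{s}\mid\mathbf{X})$ and $\min(p_1,1-p_0)$) are assumed positive. *)

(* Defs.v *)
From HB Require Import structures.
From mathcomp Require Import all_boot all_order all_algebra.
From mathcomp Require Import all_classical all_reals all_analysis.
Set Implicit Arguments. Unset Strict Implicit. Unset Printing Implicit Defensive.
Import Order.TTheory GRing.Theory Num.Theory.
Local Open Scope classical_set_scope.
Local Open Scope ring_scope.

Definition prob {R : realType} {d : measure_display} {T : measurableType d}
  (P : probability T R) (A : set T) : R := fine (P A).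

Definition cprob {R : realType} {d : measure_display} {T : measurableType d}
  (P : probability T R) (A B : set T) : R := prob P (A `&` B) / prob P B.

Definition stratum {T : Type} (S1 S0 : T -> bool) (a b : bool) : set T :=
  [set w | S1 w = a /\ S0 w = b].

Definition Sobs {T : Type} (Z S1 S0 : T -> bool) : T -> bool :=
  fun w => if Z w then S1 w else S0 w.

(* Main.v *)
Require Import Defs.
From HB Require Import structures.
From mathcomp Require Import all_boot all_order all_algebra.
From mathcomp Require Import all_classical all_reals all_analysis.
From mathcomp Require Import ring lra.
Import Order.TTheory GRing.Theory Num.Theory.
Local Open Scope classical_set_scope.
Local Open Scope ring_scope.

Lemma probU (R : realType) (d : measure_display) (T : measurableType d)
  (P : probability T R) (A B : set T) : measurable A -> measurable B ->
  A `&` B = set0 -> prob P (A `|` B) = prob P A + prob P B.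
Proof.
move=> mA mB AB; rewrite /prob measureU //.
by rewrite fineD //; apply: fin_num_measure.
Qed.

Lemma prob_ge0 (R : realType) (d : measure_display) (T : measurableType d)
  (P : probability T R) (A : set T) : 0 <= prob P A.
Proof. by apply: fine_ge0; apply: measure_ge0. Qed.

Theorem proposition5 (R : realType) (d : measure_display) (T : measurableType d)
  (P : probability T R) (dx : measure_display) (TX : measurableType dx)
  (Z S1 S0 : T -> bool) (X : T -> TX) (xi : R)
  (* measurability of the random variables *)
  (mZ : forall b : bool, measurable [set w | Z w = b])
  (mS1 : forall b : bool, measurable [set w | S1 w = b])
  (mS0 : forall b : bool, measurable [set w | S0 w = b])
  (mX : measurable_fun setT X)
  (* Z independent of (S(1), S(0), X) *)
  (indep : forall (z a b : bool) (B : set TX), measurable B ->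
     prob P ([set w | Z w = z] `&` (stratum S1 S0 a b `&` (X @^-1` B))) =
     prob P [set w | Z w = z] * prob P (stratum S1 S0 a b `&` (X @^-1` B)))
  (* conditioning events have positive probability *)
  (pZ1 : 0 < prob P [set w | Z w = true])
  (pZ0 : 0 < prob P [set w | Z w = false])
  (* p1 >= p0 *)
  (p1_ge_p0 : cprob P [set w | Sobs Z S1 S0 w = true] [set w | Z w = false]
           <= cprob P [set w | Sobs Z S1 S0 w = true] [set w | Z w = true])
  (* Pr(U = s sbar | X) > 0 a.s. *)
  (pos_ssbar : forall B : set TX, measurable B -> 0 < prob P (X @^-1` B) ->
     0 < prob P (stratum S1 S0 true false `&` (X @^-1` B)))
  (* Pr(U = sbar s | X) = xi * Pr(U = s sbar | X) a.s. *)
  (ratio : forall B : set TX, measurable B ->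
     prob P (stratum S1 S0 false true `&` (X @^-1` B)) =
     xi * prob P (stratum S1 S0 true false `&` (X @^-1` B)))
  (xi_ge0 : 0 <= xi) (xi_lt1 : xi < 1)
  (min_pos : 0 < Num.min
       (cprob P [set w | Sobs Z S1 S0 w = true] [set w | Z w = true])
       (1 - cprob P [set w | Sobs Z S1 S0 w = true] [set w | Z w = false])) :
  let p1 := cprob P [set w | Sobs Z S1 S0 w = true] [set w | Z w = true] in
  let p0 := cprob P [set w | Sobs Z S1 S0 w = true] [set w | Z w = false] in
  [/\ prob P (stratum S1 S0 true false) = (p1 - p0) / (1 - xi),
      prob P (stratum S1 S0 false false) = 1 - p0 - (p1 - p0) / (1 - xi),
      prob P (stratum S1 S0 true true) = p1 - (p1 - p0) / (1 - xi),
      prob P (stratum S1 S0 false true) = xi * (p1 - p0) / (1 - xi)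
    & 0 <= xi /\ xi <= 1 - (p1 - p0) / Num.min p1 (1 - p0)
      /\ 1 - (p1 - p0) / Num.min p1 (1 - p0) <= 1].
Proof.
have mst : forall a b, measurable (stratum S1 S0 a b).
  by move=> a b; rewrite /stratum; apply: (measurableI _ _ (mS1 a) (mS0 b)).
have ind : forall z a b, prob P ([set w | Z w = z] `&` stratum S1 S0 a b) =
    prob P [set w | Z w = z] * prob P (stratum S1 S0 a b).
  by move=> z a b; have := indep z a b _ measurableT; rewrite preimage_setT !setIT.
have rat : prob P (stratum S1 S0 false true) = xi * prob P (stratum S1 S0 true false).
  by have := ratio _ measurableT; rewrite preimage_setT !setIT.
have dec : forall z, [set w | Sobs Z S1 S0 w = true] `&` [set w | Z w = z] =
   ([set w | Z w = z] `&` stratum S1 S0 true (~~ z)) `|`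
   ([set w | Z w = z] `&` stratum S1 S0 z true).
  move=> z; apply/seteqP; split => w /=; rewrite /Sobs /stratum /=;
    case: z; case: (Z w); case: (S1 w); case: (S0 w) => //=; intuition.
have p1E : cprob P [set w | Sobs Z S1 S0 w = true] [set w | Z w = true] =
   prob P (stratum S1 S0 true false) + prob P (stratum S1 S0 true true).
  rewrite /cprob dec probU; last 3 first.
  - by apply: measurableI.
  - by apply: measurableI.
  - by apply/seteqP; split => w //= -[] [_ [h1 h2]] [_ [h3 h4]]; congruence.
  rewrite !ind; field; exact: lt0r_neq0.
have p0E : cprob P [set w | Sobs Z S1 S0 w = true] [set w | Z w = false] =
   prob P (stratum S1 S0 true true) + prob P (stratum S1 S0 false true).
  rewrite /cprob dec probU; last 3 first.
  - by apply: measurableI.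
  - by apply: measurableI.
  - by apply/seteqP; split => w //= -[] [_ [h1 h2]] [_ [h3 h4]]; congruence.
  rewrite !ind; field; exact: lt0r_neq0.
have tot : prob P (stratum S1 S0 true false) + prob P (stratum S1 S0 true true)
    + (prob P (stratum S1 S0 false true) + prob P (stratum S1 S0 false false)) = 1.
  have -> : 1 = prob P setT by rewrite /prob probability_setT.
  have E : setT = (stratum S1 S0 true false `|` stratum S1 S0 true true) `|`
     (stratum S1 S0 false true `|` stratum S1 S0 false false).
    apply/seteqP; split => w //= _; rewrite /stratum /=.
    by case: (S1 w); case: (S0 w); intuition.
  rewrite E probU; first last.
  - by apply/seteqP; split => w //= -[] [] [h1 h2] [] [h3 h4]; congruence.
  - by apply: measurableU.
  - by apply: measurableU.
  rewrite probU; first last.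
  - by apply/seteqP; split => w //= -[] [h1 h2] [h3 h4]; congruence.
  - by [].
  - by [].
  rewrite probU //.
  by apply/seteqP; split => w //= -[] [h1 h2] [h3 h4]; congruence.
move=> p1 p0.
rewrite -/p1 -/p0 in p1E p0E p1_ge_p0 min_pos.
have g1 := @prob_ge0 _ _ _ P (stratum S1 S0 true false).
have g2 := @prob_ge0 _ _ _ P (stratum S1 S0 true true).
have g3 := @prob_ge0 _ _ _ P (stratum S1 S0 false true).
have g4 := @prob_ge0 _ _ _ P (stratum S1 S0 false false).
move: p1E p0E tot rat p1_ge_p0 min_pos g1 g2 g3 g4.
set a := prob P (stratum S1 S0 true false).
set b := prob P (stratum S1 S0 true true).
set c := prob P (stratum S1 S0 false true).
set e := prob P (stratum S1 S0 false false).
move=> -> -> tot rat' H1 Hm g1 g2 g3 g4.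
rewrite rat' in tot H1 Hm g3 *.
have xi1 : 1 - xi != 0 by rewrite subr_eq0 gt_eqF.
have dE : a + b - (b + xi * a) = (1 - xi) * a by ring.
have hq : (a + b - (b + xi * a)) / (1 - xi) = a by rewrite dE; field.
rewrite -mulrA hq.
split => //; [lra|lra|].
split => //.
have amin : a <= Num.min (a + b) (1 - (b + xi * a)).
  by rewrite le_min; apply/andP; split; lra.
rewrite dE; split.
  rewrite lerBrDr -lerBrDl ler_pdivrMr; last exact: Hm.
  have h : 0 <= 1 - xi by lra.
  have := ler_wpM2l h amin; lra.
rewrite lerBlDl lerDr; apply: divr_ge0; last exact: ltW.
by apply: mulr_ge0; lra.
Qed.
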